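(* For the hypergeometric weights described in the context, the functions $q_n:=\log H_n$ and $f_n:=S^{[1]}_n=p^1_{n+1}$ satisfy, for $n\ge1$, \[ \vartheta q_n=f_{n-1}-f_n,\qquad \vartheta^2 f_n-(2f_n-f_{n+1}-f_{n-1})\vartheta f_n=\mathrm e^{q_{n+1}-q_{n-1}}-\mathrm e^{q_{n+2}-q_n}. \]
   Context: Weights on $\mathbb N_0$: $w^{(a)}(k)=\frac{(b^{(a)}_1)_k\cdots(b^{(a)}_{M^{(a)}})_k}{(c_1)_k\cdots(c_N)_k}\frac{(\eta^{(a)})^k}{k!}$, $a\in\{1,2\}$, with convergent series. Moment matrix (indices from 0): $\mathscr M_{n,2m}=\sum_k k^{n+m}w^{(1)}(k)$, $\mathscr M_{n,2m+1}=\sum_k k^{n+m}w^{(2)}(k)$, with all leading principal minors nonzero, so $\mathscr M=S^{-1}H\tilde S^{-\top}$, $S,\tilde S$ lower unitriangular, $H=\operatorname{diag}(H_0,H_1,\dots)$, all depending on $(\eta^{(1)},\eta^{(2)})$. Write $S=I+\Lambda^\top S^{[1]}+(\Lambda^\top)^2S^{[2]}+\cdots$ with $\Lambda$ the matrix with ones on the first superdiagonal and $S^{[1]}=\operatorname{diag}(S^{[1]}_0,S^{[1]}_1,\dots)$. $B_n(x)=x^n+p^1_nx^{n-1}+\cdots$ is the $n$-th entry of $SX(x)$, $X(x)=(1,x,x^2,\dots)^\top$. $\vartheta=\eta^{(1)}\partial/\partial\eta^{(1)}+\eta^{(2)}\partial/\partial\eta^{(2)}$. *)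

(* Defs.v *)
From Stdlib Require Import Reals Arith.
From Coquelicot Require Import Coquelicot.
Open Scope R_scope.

Fixpoint poch (b : R) (k : nat) : R :=
  match k with
  | O => 1
  | S k' => poch b k' * (b + INR k')
  end.

Fixpoint poch_prod (M : nat) (b : nat -> R) (k : nat) : R :=
  match M with
  | O => 1
  | S M' => poch_prod M' b k * poch (b M') k
  end.

(** Hypergeometric weight
    w(k) = (b_1)_k...(b_M)_k / ((c_1)_k...(c_N)_k) * eta^k / k!  (indices shifted to 0..M-1, 0..N-1). *)
Definition hweight (M : nat) (b : nat -> R) (N : nat) (c : nat -> R) (eta : R) (k : nat) : R :=
  poch_prod M b k / poch_prod N c k * eta ^ k / INR (fact k).

Definition moment (w1 w2 : nat -> R) (n m : nat) : R :=
  if Nat.even m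
  then Series (fun k => INR k ^ (n + Nat.div2 m) * w1 k)
  else Series (fun k => INR k ^ (n + Nat.div2 m) * w2 k).

Fixpoint detn (n : nat) (A : nat -> nat -> R) : R :=
  match n with
  | O => 1
  | S n' => sum_f_R0 (fun j => (-1) ^ j * A O j *
              detn n' (fun i l => A (S i) (if Nat.ltb l j then l else S l))) n'
  end.

Definition theta (g : R -> R -> R) (x y : R) : R :=
  x * Derive (fun t => g t y) x + y * Derive (fun t => g x t) y.

Definition partials_exist (g : R -> R -> R) (x y : R) : Prop :=
  ex_derive (fun t => g t y) x /\ ex_derive (fun t => g x t) y.

(* Main.v *)
Require Import Defs.
From Stdlib Require Import Reals Arith Lra Lia.
From Coquelicot Require Import Coquelicot.
Open Scope R_scope.

Definition inbox (x y eps e1 e2 : R) := Rabs (e1 - x) < eps /\ Rabs (e2 - y) < eps.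
Definition good (x y eps : R) (g : R -> R -> R) :=
  forall e1 e2, inbox x y eps e1 e2 -> partials_exist g e1 e2.

Lemma locally_int (x eps e : R) : Rabs (e - x) < eps ->
  locally e (fun t => Rabs (t - x) < eps).
Proof.
  intros He.
  assert (Hd : 0 < eps - Rabs (e - x)) by lra.
  exists (mkposreal _ Hd). intros t Ht.
  unfold ball in Ht; simpl in Ht; unfold AbsRing_ball, abs, minus, plus, opp in Ht; simpl in Ht.
  replace (t - x) with ((t + - e) + (e - x)) by ring.
  eapply Rle_lt_trans. apply Rabs_triang. lra.
Qed.

Section Box.
Variables x y eps : R.

Lemma box_loc1 (g h : R -> R -> R) e1 e2 : inbox x y eps e1 e2 ->
  (forall a b, inbox x y eps a b -> g a b = h a b) ->
  locally e1 (fun t => g t e2 = h t e2).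
Proof.
  intros [H1 H2] Hgh. eapply filter_imp; [| apply (locally_int x eps e1 H1)].
  intros t Ht. apply Hgh. split; auto.
Qed.

Lemma box_loc2 (g h : R -> R -> R) e1 e2 : inbox x y eps e1 e2 ->
  (forall a b, inbox x y eps a b -> g a b = h a b) ->
  locally e2 (fun t => g e1 t = h e1 t).
Proof.
  intros [H1 H2] Hgh. eapply filter_imp; [| apply (locally_int y eps e2 H2)].
  intros t Ht. apply Hgh. split; auto.
Qed.

Lemma good_ext g h : (forall a b, inbox x y eps a b -> g a b = h a b) ->
  good x y eps g -> good x y eps h.
Proof.
  intros Hgh Hg e1 e2 He. destruct (Hg e1 e2 He) as [G1 G2]. split.
  - eapply ex_derive_ext_loc; [apply (box_loc1 g h e1 e2 He Hgh)|exact G1].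
  - eapply ex_derive_ext_loc; [apply (box_loc2 g h e1 e2 He Hgh)|exact G2].
Qed.

Lemma theta_ext g h e1 e2 : inbox x y eps e1 e2 ->
  (forall a b, inbox x y eps a b -> g a b = h a b) ->
  theta g e1 e2 = theta h e1 e2.
Proof.
  intros He Hgh. unfold theta.
  assert (E1 : Derive (fun t => g t e2) e1 = Derive (fun t => h t e2) e1)
    by (apply Derive_ext_loc; apply (box_loc1 g h e1 e2 He Hgh)).
  assert (E2 : Derive (fun t => g e1 t) e2 = Derive (fun t => h e1 t) e2)
    by (apply Derive_ext_loc; apply (box_loc2 g h e1 e2 He Hgh)).
  rewrite E1, E2. reflexivity.
Qed.

Lemma good_const c : good x y eps (fun _ _ => c).
Proof. intros e1 e2 _. split; apply ex_derive_const. Qed.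

Lemma theta_const c e1 e2 : theta (fun _ _ => c) e1 e2 = 0.
Proof. unfold theta. rewrite !Derive_const. ring. Qed.

Lemma good_plus g h : good x y eps g -> good x y eps h ->
  good x y eps (fun a b => g a b + h a b).
Proof.
  intros Hg Hh e1 e2 He. destruct (Hg e1 e2 He), (Hh e1 e2 He).
  split; [apply (ex_derive_plus (fun t => g t e2) (fun t => h t e2))|apply (ex_derive_plus (fun t => g e1 t) (fun t => h e1 t))]; auto.
Qed.

Lemma good_mult g h : good x y eps g -> good x y eps h ->
  good x y eps (fun a b => g a b * h a b).
Proof.
  intros Hg Hh e1 e2 He. destruct (Hg e1 e2 He), (Hh e1 e2 He).
  split; [apply (ex_derive_mult (fun t => g t e2) (fun t => h t e2))|apply (ex_derive_mult (fun t => g e1 t) (fun t => h e1 t))]; auto.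
Qed.

Lemma good_opp g : good x y eps g -> good x y eps (fun a b => - g a b).
Proof.
  intros Hg. apply good_ext with (g := fun a b => (-1) * g a b).
  intros; ring. apply good_mult; auto. apply good_const.
Qed.

Lemma good_minus g h : good x y eps g -> good x y eps h ->
  good x y eps (fun a b => g a b - h a b).
Proof.
  intros Hg Hh. apply good_ext with (g := fun a b => g a b + - h a b).
  intros; ring. apply good_plus; auto. apply good_opp; auto.
Qed.

Lemma good_inv g : good x y eps g -> (forall a b, inbox x y eps a b -> g a b <> 0) ->
  good x y eps (fun a b => / g a b).
Proof.
  intros Hg Hn e1 e2 He. destruct (Hg e1 e2 He).
  split; [apply (ex_derive_inv (fun t => g t e2))|apply (ex_derive_inv (fun t => g e1 t))]; auto.
Qed.

Lemma good_div g h : good x y eps g -> good x y eps h ->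
  (forall a b, inbox x y eps a b -> h a b <> 0) ->
  good x y eps (fun a b => g a b / h a b).
Proof.
  intros Hg Hh Hn. unfold Rdiv. apply good_mult; auto. apply good_inv; auto.
Qed.

Lemma theta_plus g h e1 e2 : inbox x y eps e1 e2 -> good x y eps g -> good x y eps h ->
  theta (fun a b => g a b + h a b) e1 e2 = theta g e1 e2 + theta h e1 e2.
Proof.
  intros He Hg Hh. destruct (Hg e1 e2 He), (Hh e1 e2 He). unfold theta.
  rewrite (Derive_plus (fun t => g t e2) (fun t => h t e2)); auto.
  rewrite (Derive_plus (fun t => g e1 t) (fun t => h e1 t)); auto. simpl; ring.
Qed.

Lemma theta_mult g h e1 e2 : inbox x y eps e1 e2 -> good x y eps g -> good x y eps h ->
  theta (fun a b => g a b * h a b) e1 e2 = theta g e1 e2 * h e1 e2 + g e1 e2 * theta h e1 e2.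
Proof.
  intros He Hg Hh. destruct (Hg e1 e2 He), (Hh e1 e2 He). unfold theta.
  rewrite (Derive_mult (fun t => g t e2) (fun t => h t e2)); auto.
  rewrite (Derive_mult (fun t => g e1 t) (fun t => h e1 t)); auto. ring.
Qed.

Lemma theta_opp g e1 e2 : inbox x y eps e1 e2 -> good x y eps g ->
  theta (fun a b => - g a b) e1 e2 = - theta g e1 e2.
Proof.
  intros He Hg. rewrite (theta_ext _ (fun a b => (fun _ _ => -1) a b * g a b) e1 e2 He).
  rewrite theta_mult; auto. rewrite theta_const. ring. apply good_const.
  intros; ring.
Qed.

Lemma theta_minus g h e1 e2 : inbox x y eps e1 e2 -> good x y eps g -> good x y eps h ->
  theta (fun a b => g a b - h a b) e1 e2 = theta g e1 e2 - theta h e1 e2.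
Proof.
  intros He Hg Hh. rewrite (theta_ext _ (fun a b => g a b + - h a b) e1 e2 He).
  rewrite theta_plus; auto. rewrite theta_opp; auto. all: try (apply good_opp; auto).
  intros; ring.
Qed.

Lemma theta_inv g e1 e2 : inbox x y eps e1 e2 -> good x y eps g ->
  (forall a b, inbox x y eps a b -> g a b <> 0) ->
  theta (fun a b => / g a b) e1 e2 = - theta g e1 e2 / (g e1 e2)^2.
Proof.
  intros He Hg Hn. destruct (Hg e1 e2 He). unfold theta.
  rewrite (Derive_inv (fun t => g t e2)); auto.
  rewrite (Derive_inv (fun t => g e1 t)); auto. field. auto.
Qed.

Lemma theta_div g h e1 e2 : inbox x y eps e1 e2 -> good x y eps g -> good x y eps h ->
  (forall a b, inbox x y eps a b -> h a b <> 0) ->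
  theta (fun a b => g a b / h a b) e1 e2 =
  (theta g e1 e2 * h e1 e2 - g e1 e2 * theta h e1 e2) / (h e1 e2)^2.
Proof.
  intros He Hg Hh Hn. unfold Rdiv at 1.
  rewrite theta_mult; auto. rewrite theta_inv; auto. field. auto.
  apply good_inv; auto.
Qed.

Lemma good_sum (F : nat -> R -> R -> R) n : (forall j, good x y eps (F j)) ->
  good x y eps (fun a b => sum_f_R0 (fun j => F j a b) n).
Proof.
  intros HF. induction n; simpl. apply HF. apply good_plus; auto.
Qed.

Lemma theta_sum (F : nat -> R -> R -> R) n e1 e2 : inbox x y eps e1 e2 ->
  (forall j, good x y eps (F j)) ->
  theta (fun a b => sum_f_R0 (fun j => F j a b) n) e1 e2 = sum_f_R0 (fun j => theta (F j) e1 e2) n.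
Proof.
  intros He HF. induction n; simpl. reflexivity.
  rewrite (theta_plus (fun a b => sum_f_R0 (fun j => F j a b) n) (F (S n))); auto.
  rewrite IHn; auto. apply good_sum; auto.
Qed.

End Box.

Lemma theta_G x y eps s1 s2 s3 s4 e1 e2 : inbox x y eps e1 e2 ->
  good x y eps s1 -> good x y eps s2 -> good x y eps s3 -> good x y eps s4 ->
  theta (fun a b => (s1 a b - s2 a b) + (s3 a b - s4 a b) * s3 a b) e1 e2 =
  (theta s1 e1 e2 - theta s2 e1 e2) + (theta s3 e1 e2 - theta s4 e1 e2) * s3 e1 e2
  + (s3 e1 e2 - s4 e1 e2) * theta s3 e1 e2.
Proof.
  intros He G1 G2 G3 G4.
  rewrite (theta_plus x y eps (fun a b => s1 a b - s2 a b) (fun a b => (s3 a b - s4 a b) * s3 a b) e1 e2 He).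
  2: apply good_minus; auto. 2: apply good_mult; auto; apply good_minus; auto.
  rewrite (theta_minus x y eps s1 s2 e1 e2 He G1 G2).
  rewrite (theta_mult x y eps (fun a b => s3 a b - s4 a b) s3 e1 e2 He).
  2: apply good_minus; auto. 2: auto.
  rewrite (theta_minus x y eps s3 s4 e1 e2 He G3 G4). ring.
Qed.


Lemma lim0_bounded (u : nat -> R) : is_lim_seq u 0 -> exists M, forall n, Rabs (u n) <= M.
Proof.
  intros Hu. apply is_lim_seq_spec in Hu.
  destruct (Hu (mkposreal 1 Rlt_0_1)) as [N HN]. simpl in HN.
  exists (sum_f_R0 (fun k => Rabs (u k)) N + 1). intros n.
  assert (Hs : forall m, 0 <= sum_f_R0 (fun k => Rabs (u k)) m).
  { induction m; simpl. apply Rabs_pos. pose proof (Rabs_pos (u (S m))). lra. }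
  destruct (le_lt_dec N n) as [Hn|Hn].
  - specialize (HN n Hn). rewrite Rminus_0_r in HN. pose proof (Hs N). lra.
  - assert (forall m, (n <= m)%nat -> Rabs (u n) <= sum_f_R0 (fun k => Rabs (u k)) m).
    { induction m; intros Hm.
      - replace n with 0%nat by lia. simpl. lra.
      - destruct (Nat.eq_dec n (S m)) as [->|Hne].
        + simpl. pose proof (Hs m). lra.
        + simpl. pose proof (IHm ltac:(lia)). pose proof (Rabs_pos (u (S m))). lra. }
    pose proof (H N ltac:(lia)). lra.
Qed.

Lemma radius_int (a : nat -> R) (x eps : R) :
  (forall e, Rabs (e - x) < eps -> ex_series (fun k => a k * e ^ k)) ->
  forall e, Rabs (e - x) < eps -> Rbar_lt (Rabs e) (CV_radius a).
Proof.
  intros Hc e He.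
  assert (Hex : exists e', Rabs (e' - x) < eps /\ Rabs e < Rabs e').
  { destruct (Rle_lt_dec 0 e) as [H0|H0].
    - exists ((e + x + eps) / 2). split.
      + apply Rabs_def1; apply Rabs_def2 in He; lra.
      + apply Rabs_def2 in He. rewrite (Rabs_right e) by lra. rewrite Rabs_right; lra.
    - exists ((e + x - eps) / 2). split.
      + apply Rabs_def1; apply Rabs_def2 in He; lra.
      + apply Rabs_def2 in He. rewrite (Rabs_left e) by lra. rewrite Rabs_left; lra. }
  destruct Hex as [e' [He' Hlt]].
  assert (Hle : Rbar_le (Rabs e') (CV_radius a)).
  { destruct (CV_radius_bounded a) as [Hub _]. apply Hub.
    destruct (lim0_bounded _ (ex_series_lim_0 _ (Hc e' He'))) as [M HM].
    exists M. intros n. rewrite Rabs_mult, RPow_abs, Rabs_Rabsolu, <- Rabs_mult. apply HM. }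
  eapply Rbar_lt_le_trans; [|exact Hle]. simpl. exact Hlt.
Qed.

Definition coef (Mb : nat) (b : nat -> R) (N : nat) (c : nat -> R) (p k : nat) : R :=
  INR k ^ p * (poch_prod Mb b k / poch_prod N c k / INR (fact k)).

Lemma term_eq Mb b N c p e k :
  INR k ^ p * hweight Mb b N c e k = coef Mb b N c p k * e ^ k.
Proof. unfold coef, hweight, Rdiv. ring. Qed.

Lemma mom_deriv (Mb : nat) (b : nat -> R) (N : nat) (c : nat -> R) (x eps : R) :
  (forall e, Rabs (e - x) < eps -> forall p, ex_series (fun k => INR k ^ p * hweight Mb b N c e k)) ->
  forall p e, Rabs (e - x) < eps ->
  ex_derive (fun t => Series (fun k => INR k ^ p * hweight Mb b N c t k)) e /\
  e * Derive (fun t => Series (fun k => INR k ^ p * hweight Mb b N c t k)) e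
    = Series (fun k => INR k ^ (S p) * hweight Mb b N c e k).
Proof.
  intros Hc p e He.
  assert (Hf : forall t, Series (fun k => INR k ^ p * hweight Mb b N c t k) = PSeries (coef Mb b N c p) t).
  { intros t. unfold PSeries. apply Series_ext. intros k. apply term_eq. }
  assert (Hr : forall q, Rbar_lt (Rabs e) (CV_radius (coef Mb b N c q))).
  { intros q. apply (radius_int _ x eps); auto. intros e0 He0.
    eapply ex_series_ext; [|apply (Hc e0 He0 q)]. intros k. apply term_eq. }
  split.
  - eapply ex_derive_ext. intros t. symmetry. apply Hf. apply ex_derive_PSeries. apply Hr.
  - rewrite (Derive_ext _ (PSeries (coef Mb b N c p))) by apply Hf.
    rewrite Derive_PSeries by apply Hr.
    rewrite (Series_ext (fun k => INR k ^ (S p) * hweight Mb b N c e k) (fun k => coef Mb b N c (S p) k * e ^ k)) by (intros; apply term_eq).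
    unfold PSeries.
    rewrite <- Series_scal_l.
    rewrite (Series_incr_1 (fun k => coef Mb b N c (S p) k * e ^ k)).
    + unfold coef at 2. simpl INR at 1. rewrite pow_i by lia. rewrite !Rmult_0_l, Rplus_0_l.
      apply Series_ext. intros k. unfold PS_derive, coef. change (e ^ S k) with (e * e ^ k). change (INR (S k) ^ S p) with (INR (S k) * INR (S k) ^ p). ring.
    + eapply ex_series_ext; [|apply (Hc e He (S p))]. intros k. apply term_eq.
Qed.

Definition mom (M1 : nat) (b1 : nat -> R) (M2 : nat) (b2 : nat -> R) (N : nat) (c : nat -> R)
  (j l : nat) : R -> R -> R :=
  fun e1 e2 => moment (hweight M1 b1 N c e1) (hweight M2 b2 N c e2) j l.

Lemma mom_good_theta M1 b1 M2 b2 N c x y eps :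
  (forall e, Rabs (e - x) < eps -> forall p, ex_series (fun k => INR k ^ p * hweight M1 b1 N c e k)) ->
  (forall e, Rabs (e - y) < eps -> forall p, ex_series (fun k => INR k ^ p * hweight M2 b2 N c e k)) ->
  forall j l, good x y eps (mom M1 b1 M2 b2 N c j l) /\
    forall e1 e2, inbox x y eps e1 e2 ->
      theta (mom M1 b1 M2 b2 N c j l) e1 e2 = mom M1 b1 M2 b2 N c (S j) l e1 e2.
Proof.
  intros H1 H2 j l. unfold mom, moment.
  destruct (Nat.even l).
  - split.
    + intros e1 e2 [He1 He2]. split.
      * apply (mom_deriv M1 b1 N c x eps H1 (j + Nat.div2 l) e1 He1).
      * apply ex_derive_const.
    + intros e1 e2 [He1 He2]. unfold theta. rewrite Derive_const.
      rewrite (proj2 (mom_deriv M1 b1 N c x eps H1 (j + Nat.div2 l) e1 He1)). simpl. ring.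
  - split.
    + intros e1 e2 [He1 He2]. split.
      * apply ex_derive_const.
      * apply (mom_deriv M2 b2 N c y eps H2 (j + Nat.div2 l) e2 He2).
    + intros e1 e2 [He1 He2]. unfold theta. rewrite Derive_const.
      rewrite (proj2 (mom_deriv M2 b2 N c y eps H2 (j + Nat.div2 l) e2 He2)). simpl. ring.
Qed.

Lemma mom_shift M1 b1 M2 b2 N c j l e1 e2 :
  mom M1 b1 M2 b2 N c (S j) l e1 e2 = mom M1 b1 M2 b2 N c j (S (S l)) e1 e2.
Proof.
  unfold mom, moment. simpl Nat.even. simpl Nat.div2.
  replace (S j + Nat.div2 l)%nat with (j + S (Nat.div2 l))%nat by lia. reflexivity.
Qed.


Lemma sum_ext (f g : nat -> R) n : (forall j, (j <= n)%nat -> f j = g j) ->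
  sum_f_R0 f n = sum_f_R0 g n.
Proof. intros; apply sum_eq; auto. Qed.

Lemma sum_shift (f : nat -> R) n : sum_f_R0 f (S n) = f 0%nat + sum_f_R0 (fun j => f (S j)) n.
Proof. induction n. simpl. ring. change (sum_f_R0 f (S (S n))) with (sum_f_R0 f (S n) + f (S (S n))).
  rewrite IHn. simpl. ring. Qed.

Lemma sum_zero (f : nat -> R) n : (forall j, (j <= n)%nat -> f j = 0) -> sum_f_R0 f n = 0.
Proof. intros H. induction n; simpl. apply H; lia. rewrite IHn, H; auto. ring. Qed.

Lemma sum_trunc (f : nat -> R) n m : (n <= m)%nat -> (forall j, (n < j <= m)%nat -> f j = 0) ->
  sum_f_R0 f m = sum_f_R0 f n.
Proof.
  intros Hnm H. induction m.
  - replace n with 0%nat by lia. reflexivity.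
  - destruct (Nat.eq_dec n (S m)) as [->|Hne]. reflexivity.
    simpl. rewrite IHm by (lia || (intros; apply H; lia)). rewrite H by lia. ring.
Qed.

Lemma sum_plus2 (f g : nat -> R) n : sum_f_R0 (fun j => f j + g j) n = sum_f_R0 f n + sum_f_R0 g n.
Proof. induction n; simpl. ring. rewrite IHn. ring. Qed.

Lemma sum_minus2 (f g : nat -> R) n : sum_f_R0 (fun j => f j - g j) n = sum_f_R0 f n - sum_f_R0 g n.
Proof. induction n; simpl. ring. rewrite IHn. ring. Qed.

Lemma sum_scal (a : R) (f : nat -> R) n : sum_f_R0 (fun j => a * f j) n = a * sum_f_R0 f n.
Proof. induction n; simpl. ring. rewrite IHn. ring. Qed.

Lemma sum_swap (F : nat -> nat -> R) n m :
  sum_f_R0 (fun j => sum_f_R0 (fun l => F j l) m) n = sum_f_R0 (fun l => sum_f_R0 (fun j => F j l) n) m.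
Proof.
  induction n; simpl. reflexivity. rewrite IHn. rewrite <- sum_plus2. reflexivity.
Qed.

Section Alg.
Variables (S S' M : nat -> nat -> R) (H H' : nat -> R).
Hypothesis hS1 : forall i, S i i = 1.
Hypothesis hS0 : forall i j, (i < j)%nat -> S i j = 0.
Hypothesis hU : forall i l, (l <= i)%nat ->
  sum_f_R0 (fun j => S i j * M j l) i = if Nat.eqb l i then H i else 0.
Hypothesis hS'0 : forall i j, (i <= j)%nat -> S' i j = 0.
Hypothesis hD : forall i l, (l <= i)%nat ->
  sum_f_R0 (fun j => S' i j * M j l + S i j * M (Datatypes.S j) l) i = if Nat.eqb l i then H' i else 0.
Hypothesis hM : forall j l, M (Datatypes.S j) l = M j (Datatypes.S (Datatypes.S l)).
Hypothesis hker : forall p (v : nat -> R), (1 <= p)%nat ->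
  (forall l, (l < p)%nat -> sum_f_R0 (fun j => v j * M j l) (p - 1) = 0) ->
  forall j, (j < p)%nat -> v j = 0.

Lemma alg_Hnz i : H i <> 0.
Proof.
  intros H0. assert (Hv := hker (Datatypes.S i) (fun j => S i j) ltac:(lia)).
  assert (1 = 0); [|lra]. rewrite <- (hS1 i). apply Hv; [|lia].
  intros l Hl. replace (Datatypes.S i - 1)%nat with i by lia. rewrite hU by lia.
  destruct (Nat.eqb l i); auto.
Qed.

Lemma U_ext i l n : (i <= n)%nat ->
  sum_f_R0 (fun j => S i j * M j l) n = sum_f_R0 (fun j => S i j * M j l) i.
Proof. intros Hn. apply sum_trunc; auto. intros j Hj. rewrite hS0 by lia. ring. Qed.

Lemma alg_K1 m :
  (forall j, (j < Datatypes.S m)%nat ->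
    S' (Datatypes.S m) j = S (Datatypes.S (Datatypes.S m)) j
      - (match j with O => 0 | Datatypes.S j' => S (Datatypes.S m) j' end)
      + (S (Datatypes.S m) m - S (Datatypes.S (Datatypes.S m)) (Datatypes.S m)) * S (Datatypes.S m) j)
  /\ H' (Datatypes.S m) = (S (Datatypes.S m) m - S (Datatypes.S (Datatypes.S m)) (Datatypes.S m)) * H (Datatypes.S m).
Proof.
  set (i := Datatypes.S m).
  set (al := S i m - S (Datatypes.S i) i).
  set (z := fun j => S' i j + (match j with O => 0 | Datatypes.S j' => S i j' end)
                      - S (Datatypes.S i) j - al * S i j).
  assert (Hz : forall l, (l <= i)%nat ->
     sum_f_R0 (fun j => z j * M j l) i = if Nat.eqb l i then H' i - al * H i else 0).
  { intros l Hl.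
    assert (E1 : sum_f_R0 (fun j => z j * M j l) i =
       sum_f_R0 (fun j => S' i j * M j l + S i j * M (Datatypes.S j) l) i
       - sum_f_R0 (fun j => S i j * M (Datatypes.S j) l) i
       + sum_f_R0 (fun j => (match j with O => 0 | Datatypes.S j' => S i j' end) * M j l) i
       - sum_f_R0 (fun j => S (Datatypes.S i) j * M j l) i
       - al * sum_f_R0 (fun j => S i j * M j l) i).
    { rewrite <- sum_scal, <- !sum_minus2, <- !sum_plus2, <- !sum_minus2.
      apply sum_ext. intros j _. unfold z. ring. }
    rewrite E1. clear E1.
    rewrite hD by auto. rewrite hU by auto.
    assert (E2 : sum_f_R0 (fun j => (match j with O => 0 | Datatypes.S j' => S i j' end) * M j l) i
               = sum_f_R0 (fun j => S i j * M (Datatypes.S j) l) i - M (Datatypes.S i) l).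
    { unfold i. rewrite sum_shift. simpl (match 0%nat with O => 0 | _ => _ end).
      change (sum_f_R0 (fun j : nat => S (Datatypes.S m) j * M (Datatypes.S j) l) (Datatypes.S m))
        with (sum_f_R0 (fun j : nat => S (Datatypes.S m) j * M (Datatypes.S j) l) m
              + S (Datatypes.S m) (Datatypes.S m) * M (Datatypes.S (Datatypes.S m)) l).
      rewrite hS1. ring. }
    assert (E3 : sum_f_R0 (fun j => S (Datatypes.S i) j * M j l) i = - M (Datatypes.S i) l).
    { assert (E := hU (Datatypes.S i) l ltac:(lia)).
      replace (Nat.eqb l (Datatypes.S i)) with false in E by (symmetry; apply Nat.eqb_neq; lia).
      change (sum_f_R0 ?F (Datatypes.S i)) with (sum_f_R0 F i + F (Datatypes.S i)) in E.
      cbv beta in E. rewrite hS1 in E. lra. }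
    rewrite E2, E3. destruct (Nat.eqb l i); ring. }
  assert (Hzi : z i = 0).
  { unfold z, i. rewrite hS'0 by lia. rewrite hS1. unfold al, i. ring. }
  assert (Hz0 : forall j, (j < i)%nat -> z j = 0).
  { apply (hker i z). unfold i; lia. intros l Hl.
    replace (i - 1)%nat with m by (unfold i; lia).
    assert (E := Hz l ltac:(lia)). replace (Nat.eqb l i) with false in E by (symmetry; apply Nat.eqb_neq; lia).
    unfold i in E. simpl in E. fold i in E. rewrite Hzi in E. lra. }
  split.
  - intros j Hj. assert (E := Hz0 j Hj). unfold z in E. fold i. fold al. lra.
  - assert (E := Hz i ltac:(lia)). rewrite Nat.eqb_refl in E.
    rewrite sum_zero in E. fold i. fold al. lra.
    intros j Hj. destruct (Nat.eq_dec j i) as [->|Hne]. rewrite Hzi; ring. rewrite Hz0 by lia. ring.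
Qed.

Lemma alg_K2 m :
  S' (Datatypes.S (Datatypes.S m)) m =
    - H (Datatypes.S (Datatypes.S m)) / H m
    + S' (Datatypes.S (Datatypes.S m)) (Datatypes.S m) * S (Datatypes.S m) m.
Proof.
  set (i := Datatypes.S (Datatypes.S m)).
  set (a := - H i / H m). set (b := S' i (Datatypes.S m)).
  set (v := fun j => S' i j - a * S m j - b * S (Datatypes.S m) j).
  assert (Hv : forall l, (l <= m)%nat -> sum_f_R0 (fun j => v j * M j l) i = 0).
  { intros l Hl.
    assert (E1 : sum_f_R0 (fun j => v j * M j l) i =
       sum_f_R0 (fun j => S' i j * M j l + S i j * M (Datatypes.S j) l) i
       - sum_f_R0 (fun j => S i j * M j (Datatypes.S (Datatypes.S l))) i
       - a * sum_f_R0 (fun j => S m j * M j l) i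
       - b * sum_f_R0 (fun j => S (Datatypes.S m) j * M j l) i).
    { rewrite <- !sum_scal, <- !sum_minus2.
      apply sum_ext. intros j _. unfold v. rewrite hM. ring. }
    rewrite E1. rewrite hD by (unfold i; lia).
    replace (Nat.eqb l i) with false by (symmetry; apply Nat.eqb_neq; unfold i; lia).
    rewrite (U_ext m l i) by (unfold i; lia).
    rewrite (U_ext (Datatypes.S m) l i) by (unfold i; lia).
    rewrite !hU by (unfold i; lia).
    replace (Nat.eqb l (Datatypes.S m)) with false by (symmetry; apply Nat.eqb_neq; lia).
    destruct (Nat.eq_dec l m) as [->|Hne].
    - rewrite !Nat.eqb_refl. unfold a. field. apply alg_Hnz.
    - replace (Nat.eqb l m) with false by (symmetry; apply Nat.eqb_neq; lia).
      replace (Nat.eqb (Datatypes.S (Datatypes.S l)) i) with false by (symmetry; apply Nat.eqb_neq; unfold i; lia).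
      ring. }
  assert (Hv1 : v (Datatypes.S m) = 0).
  { unfold v. rewrite hS0 by lia. rewrite hS1. unfold b. ring. }
  assert (Hv2 : v i = 0).
  { unfold v, i. rewrite hS'0 by lia. rewrite !hS0 by lia. ring. }
  assert (Hv0 : forall j, (j < Datatypes.S m)%nat -> v j = 0).
  { apply (hker (Datatypes.S m) v). lia. intros l Hl.
    replace (Datatypes.S m - 1)%nat with m by lia.
    rewrite <- (Hv l) by lia. symmetry. apply sum_trunc. unfold i; lia.
    intros j Hj. destruct (Nat.eq_dec j (Datatypes.S m)) as [->|Hne]. rewrite Hv1; ring.
    replace j with i by (unfold i; lia). rewrite Hv2. ring. }
  assert (E := Hv0 m ltac:(lia)). unfold v in E. rewrite hS1 in E. fold i. fold a. fold b. lra.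
Qed.

End Alg.

Lemma U_from_fact (S T M : nat -> nat -> R) (H : nat -> R) :
  (forall i, T i i = 1) ->
  (forall i m, sum_f_R0 (fun j => sum_f_R0 (fun l => S i j * M j l * T m l) m) i
               = if Nat.eqb i m then H i else 0) ->
  forall i l, (l <= i)%nat -> sum_f_R0 (fun j => S i j * M j l) i = if Nat.eqb l i then H i else 0.
Proof.
  intros hT hF i.
  assert (G : forall n l, (l <= n)%nat -> (l <= i)%nat ->
            sum_f_R0 (fun j => S i j * M j l) i = if Nat.eqb l i then H i else 0).
  { induction n; intros l Hln Hli.
    - replace l with 0%nat by lia. assert (E := hF i 0%nat). rewrite sum_swap in E.
      simpl in E. rewrite hT in E.
      rewrite Nat.eqb_sym. rewrite <- E. apply sum_ext. intros; ring.
    - destruct (Nat.eq_dec l (Datatypes.S n)) as [->|Hne]; [|apply IHn; lia].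
      assert (E := hF i (Datatypes.S n)). rewrite sum_swap in E.
      change (sum_f_R0 ?F (Datatypes.S n)) with (sum_f_R0 F n + F (Datatypes.S n)) in E.
      cbv beta in E.
      rewrite sum_zero in E.
      + rewrite Nat.eqb_sym. rewrite <- E.
        rewrite Rplus_0_l. apply sum_ext. intros j _. rewrite hT. ring.
      + intros l' Hl'.
        assert (Hl'0 : sum_f_R0 (fun j => S i j * M j l') i = 0).
        { rewrite IHn by lia. replace (Nat.eqb l' i) with false by (symmetry; apply Nat.eqb_neq; lia). reflexivity. }
        transitivity (sum_f_R0 (fun j => S i j * M j l') i * T (Datatypes.S n) l').
        { rewrite Rmult_comm, <- sum_scal. apply sum_ext. intros; ring. }
        rewrite Hl'0. ring. }
  intros l Hl. apply (G l l); lia.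
Qed.

Module LA.
From mathcomp Require Import all_boot all_algebra.
From mathcomp Require Import Rstruct.
Import GRing.Theory.
Local Open Scope ring_scope.

Lemma m1E : IZR (Zneg xH) = -1.
Proof. by []. Qed.

Lemma detn_det n (A : nat -> nat -> R) : detn n A = \det (\matrix_(i, j < n) A i j).
Proof.
elim: n A => [|n IH] A; first by rewrite det_mx00.
rewrite (expand_det_row _ ord0) /= sum_f_R0E big_mkord.
apply: eq_bigr => j _; rewrite IH mxE /cofactor RpowE m1E.
rewrite add0n !RmultE -mulrA mulrCA; congr (_ * (_ * \det _)).
apply/matrixP => i l; rewrite !mxE /=.
rewrite /bump; case: (ltnP l j) => h.
- have -> : Nat.ltb l j = true by apply/Nat.ltb_lt/ltP.
  by rewrite leq0n.
- have -> : Nat.ltb l j = false by apply/Nat.ltb_ge/leP.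
  by rewrite leq0n.
Qed.


Lemma kernel (A : nat -> nat -> R) p (v : nat -> R) : detn p A <> 0%R -> le 1 p ->
  (forall l, lt l p -> sum_f_R0 (fun j => Rmult (v j) (A j l)) (Nat.sub p 1) = 0%R) ->
  forall j, lt j p -> v j = 0%R.
Proof.
case: p => [|p] hdet hp hv j hj; first by lia.
set Am := \matrix_(i, l < p.+1) A i l.
have uA : Am \in unitmx by rewrite unitmxE unitfE -detn_det; apply/eqP.
set vr := \row_(l < p.+1) v l.
have h0 : vr *m Am = 0.
  apply/rowP => l; rewrite !mxE.
  have E := hv l (elimT ltP (ltn_ord l)).
  rewrite /= Nat.sub_0_r sum_f_R0E big_mkord in E.
  rewrite -[RHS]E; apply: eq_bigr => i _; rewrite !mxE //.
have : vr = 0 by rewrite -(mulmxK uA vr) h0 mul0mx.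
move/rowP/(_ (Ordinal (introT ltP hj))); rewrite !mxE => ->.
by [].
Qed.


Section G.
Variables x y eps : R.

Lemma good_big (I : Type) (r : seq I) (P : pred I) (F : I -> R -> R -> R) :
  (forall i, good x y eps (F i)) -> good x y eps (fun a b => \sum_(i <- r | P i) F i a b).
Proof.
move=> HF; elim: r => [|i r IH].
  apply: (good_ext x y eps (fun _ _ => 0%R)); last exact: good_const.
  by move=> a b _; rewrite big_nil.
apply: (good_ext x y eps (fun a b => if P i then F i a b + \sum_(j <- r | P j) F j a b
                                    else \sum_(j <- r | P j) F j a b)).
  by move=> a b _; rewrite big_cons.
case: (P i); last exact: IH.
exact: good_plus.
Qed.

Lemma good_bigprod (I : Type) (r : seq I) (P : pred I) (F : I -> R -> R -> R) :
  (forall i, good x y eps (F i)) -> good x y eps (fun a b => \prod_(i <- r | P i) F i a b).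
Proof.
move=> HF; elim: r => [|i r IH].
  apply: (good_ext x y eps (fun _ _ => 1%R)); last exact: good_const.
  by move=> a b _; rewrite big_nil.
apply: (good_ext x y eps (fun a b => if P i then F i a b * \prod_(j <- r | P j) F j a b
                                    else \prod_(j <- r | P j) F j a b)).
  by move=> a b _; rewrite big_cons.
case: (P i); last exact: IH.
exact: good_mult.
Qed.

Lemma good_det n (B : R -> R -> 'M[R]_n) :
  (forall i j, good x y eps (fun a b => B a b i j)) -> good x y eps (fun a b => \det (B a b)).
Proof.
move=> HB; rewrite /determinant.
apply: good_big => s; apply: good_mult; first exact: good_const.
exact: good_bigprod.
Qed.

Lemma cramer_good (A : nat -> nat -> R -> R -> R) (b : nat -> R -> R -> R) p :
  (forall j l, good x y eps (A j l)) -> (forall l, good x y eps (b l)) ->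
  (forall a c, inbox x y eps a c -> detn p (fun j l => A j l a c) <> 0%R) ->
  forall j, lt j p -> exists g, good x y eps g /\
    forall a c, inbox x y eps a c -> forall s : nat -> R,
      (forall l, lt l p -> sum_f_R0 (fun k => Rmult (s k) (A k l a c)) (Nat.sub p 1) = b l a c) ->
      s j = g a c.
Proof.
case: p => [|p] HA Hb Hdet j hj; first by lia.
pose Am a c := \matrix_(i, l < p.+1) A i l a c.
pose jj := Ordinal (introT ltP hj).
exists (fun a c => \sum_(l < p.+1) b l a c * ((\det (Am a c))^-1 * cofactor (Am a c) jj l)).
split.
  apply: good_big => l; apply: good_mult; first exact: Hb.
  apply: good_mult.
    apply: good_inv.
      by apply: good_det => i k; rewrite /Am; apply: (good_ext x y eps (A i k)) => // a c _; rewrite mxE.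
    by move=> a c hac; rewrite /Am -(detn_det _ (fun i l => A i l a c)); apply: Hdet.
  rewrite /cofactor; apply: good_mult; first exact: good_const.
  apply: good_det => i k.
  by apply: (good_ext x y eps (A (lift jj i) (lift l k))) => // a c _; rewrite !mxE.
move=> a c hac s hs.
have uA : Am a c \in unitmx by rewrite unitmxE unitfE /Am -(detn_det _ (fun i l => A i l a c)); apply/eqP; apply: Hdet.
set sr := \row_(k < p.+1) s k.
set br := \row_(k < p.+1) b k a c.
have h0 : sr *m Am a c = br.
  apply/rowP => l; rewrite !mxE.
  have E := hs l (elimT ltP (ltn_ord l)).
  rewrite /= Nat.sub_0_r sum_f_R0E big_mkord in E.
  rewrite -[RHS]E; apply: eq_bigr => i _; rewrite !mxE //.
have h1 : sr = br *m invmx (Am a c) by rewrite -h0 mulmxK.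
move/rowP: h1 => /(_ jj); rewrite !mxE => ->.
apply: eq_bigr => l _; rewrite /invmx uA !mxE //.
Qed.

End G.
End LA.

Theorem mainTheorem12
  (M1 M2 N : nat) (b1 b2 c : nat -> R)
  (Sm Stm : R -> R -> nat -> nat -> R) (H : R -> R -> nat -> R)
  (x y eps : R) :
  (forall i j, (i < N)%nat -> c i + INR j <> 0) ->
  0 < eps ->
  (forall e1 e2, Rabs (e1 - x) < eps -> Rabs (e2 - y) < eps ->
     (forall j, ex_series (fun k => INR k ^ j * hweight M1 b1 N c e1 k)) /\
     (forall j, ex_series (fun k => INR k ^ j * hweight M2 b2 N c e2 k)) /\
     (forall n, detn n (moment (hweight M1 b1 N c e1) (hweight M2 b2 N c e2)) <> 0) /\
     (forall i, Sm e1 e2 i i = 1 /\ Stm e1 e2 i i = 1) /\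
     (forall i j, (i < j)%nat -> Sm e1 e2 i j = 0 /\ Stm e1 e2 i j = 0) /\
     (forall i m,
        sum_f_R0 (fun j => sum_f_R0 (fun l =>
            Sm e1 e2 i j * moment (hweight M1 b1 N c e1) (hweight M2 b2 N c e2) j l
            * Stm e1 e2 m l) m) i
        = if Nat.eqb i m then H e1 e2 i else 0)) ->
  let Hn := fun n => fun e1 e2 => H e1 e2 n in
  let f := fun n => fun e1 e2 => Sm e1 e2 (S n) n in
  forall n : nat, (1 <= n)%nat ->
    partials_exist (Hn n) x y /\ partials_exist (f n) x y /\
    partials_exist (theta (f n)) x y /\
    theta (Hn n) x y / Hn n x y = f (n - 1)%nat x y - f n x y /\
    theta (theta (f n)) x y
      - (2 * f n x y - f (S n) x y - f (n - 1)%nat x y) * theta (f n) x y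
    = Hn (S n) x y / Hn (n - 1)%nat x y - Hn (S (S n)) x y / Hn n x y.
Proof.
  intros _ Heps HYP Hn f n Hn1.
  set (Mf := mom M1 b1 M2 b2 N c).
  assert (HC1 : forall e, Rabs (e - x) < eps -> forall p, ex_series (fun k => INR k ^ p * hweight M1 b1 N c e k)).
  { intros e He. apply (HYP e y He). rewrite Rminus_diag, Rabs_R0. exact Heps. }
  assert (HC2 : forall e, Rabs (e - y) < eps -> forall p, ex_series (fun k => INR k ^ p * hweight M2 b2 N c e k)).
  { intros e He. apply (HYP x e). rewrite Rminus_diag, Rabs_R0. exact Heps. exact He. }
  assert (MG := mom_good_theta M1 b1 M2 b2 N c x y eps HC1 HC2). fold Mf in MG.
  assert (PT : forall a b, inbox x y eps a b ->
     (forall p, detn p (fun j l => Mf j l a b) <> 0) /\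
     (forall i, Sm a b i i = 1) /\ (forall i j, (i < j)%nat -> Sm a b i j = 0) /\
     (forall i l, (l <= i)%nat -> sum_f_R0 (fun j => Sm a b i j * Mf j l a b) i
                                   = if Nat.eqb l i then H a b i else 0)).
  { intros a b [Ha Hb]. destruct (HYP a b Ha Hb) as (_ & _ & Hd & H1 & H0 & Hf).
    split; [exact Hd|]. split; [intros i; apply H1|]. split; [intros i j Hij; apply H0; auto|].
    apply (U_from_fact (Sm a b) (Stm a b) (fun j l => Mf j l a b) (H a b)).
    intros i; apply H1. exact Hf. }
  assert (Hker : forall a b, inbox x y eps a b -> forall p (v : nat -> R), (1 <= p)%nat ->
    (forall l, (l < p)%nat -> sum_f_R0 (fun j => v j * Mf j l a b) (p - 1) = 0) ->
    forall j, (j < p)%nat -> v j = 0).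
  { intros a b Hab p v Hp Hv. apply (LA.kernel (fun j l => Mf j l a b) p v). apply PT; auto. auto. exact Hv. }
  assert (GS : forall i j, good x y eps (fun a b => Sm a b i j)).
  { intros i j. destruct (le_lt_dec i j) as [Hij|Hij].
    - apply good_ext with (g := fun _ _ => if Nat.eqb i j then 1 else 0); [|apply good_const].
      intros a b Hab. destruct (PT a b Hab) as (_ & H1 & H0 & _).
      destruct (Nat.eqb_spec i j) as [->|Hne]. rewrite H1; auto. rewrite H0; auto; lia.
    - destruct (LA.cramer_good x y eps Mf (fun l a b => - Mf i l a b) i) with (j := j) as [g [Hg Hgs]].
      + intros; apply MG.
      + intros l. apply good_opp. apply MG.
      + intros a b Hab. apply PT; auto.
      + exact Hij.
      + apply good_ext with (g := g); auto.
        intros a b Hab. symmetry. apply (Hgs a b Hab (fun k => Sm a b i k)).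
        intros l Hl. destruct (PT a b Hab) as (_ & H1 & _ & HU).
        assert (E := HU i l ltac:(lia)).
        replace (Nat.eqb l i) with false in E by (symmetry; apply Nat.eqb_neq; lia).
        destruct i as [|i']; [lia|].
        replace (Datatypes.S i' - 1)%nat with i' by lia.
        change (sum_f_R0 ?F (Datatypes.S i')) with (sum_f_R0 F i' + F (Datatypes.S i')) in E.
        cbv beta in E. rewrite H1 in E. lra. }
  assert (GH : forall i, good x y eps (fun a b => H a b i)).
  { intros i. apply good_ext with (g := fun a b => sum_f_R0 (fun j => Sm a b i j * Mf j i a b) i).
    - intros a b Hab. destruct (PT a b Hab) as (_ & _ & _ & HU). rewrite HU by lia.
      rewrite Nat.eqb_refl. reflexivity.
    - apply good_sum. intros j. apply good_mult. apply GS. apply MG. }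
  assert (ALG : forall a b, inbox x y eps a b ->
    (forall i, H a b i <> 0) /\
    (forall m, (forall j, (j < Datatypes.S m)%nat ->
      theta (fun a b => Sm a b (Datatypes.S m) j) a b = Sm a b (Datatypes.S (Datatypes.S m)) j
      - (match j with O => 0 | Datatypes.S j' => Sm a b (Datatypes.S m) j' end)
      + (Sm a b (Datatypes.S m) m - Sm a b (Datatypes.S (Datatypes.S m)) (Datatypes.S m)) * Sm a b (Datatypes.S m) j)
      /\ theta (fun a b => H a b (Datatypes.S m)) a b =
         (Sm a b (Datatypes.S m) m - Sm a b (Datatypes.S (Datatypes.S m)) (Datatypes.S m)) * H a b (Datatypes.S m)) /\
    (forall m, theta (fun a b => Sm a b (Datatypes.S (Datatypes.S m)) m) a b =
      - H a b (Datatypes.S (Datatypes.S m)) / H a b m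
      + theta (fun a b => Sm a b (Datatypes.S (Datatypes.S m)) (Datatypes.S m)) a b * Sm a b (Datatypes.S m) m)).
  { intros a b Hab. destruct (PT a b Hab) as (Hd & H1 & H0 & HU).
    set (S' := fun i j => theta (fun a b => Sm a b i j) a b).
    set (H' := fun i => theta (fun a b => H a b i) a b).
    assert (hS'0 : forall i j, (i <= j)%nat -> S' i j = 0).
    { intros i j Hij. unfold S'.
      rewrite (theta_ext x y eps _ (fun _ _ => if Nat.eqb i j then 1 else 0) a b Hab).
      apply theta_const.
      intros a' b' Hab'. destruct (PT a' b' Hab') as (_ & H1' & H0' & _).
      destruct (Nat.eqb_spec i j) as [->|Hne]. rewrite H1'; auto. rewrite H0'; auto; lia. }
    assert (hD : forall i l, (l <= i)%nat ->
      sum_f_R0 (fun j => S' i j * Mf j l a b + Sm a b i j * Mf (Datatypes.S j) l a b) i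
      = if Nat.eqb l i then H' i else 0).
    { intros i l Hli.
      assert (Hg : forall j, good x y eps (fun a b => Sm a b i j * Mf j l a b)).
      { intros j. apply good_mult. apply GS. apply MG. }
      assert (Hext : forall a' b', inbox x y eps a' b' ->
         sum_f_R0 (fun j => Sm a' b' i j * Mf j l a' b') i = if Nat.eqb l i then H a' b' i else 0).
      { intros a' b' Hab'. destruct (PT a' b' Hab') as (_ & _ & _ & HU'). apply HU'. exact Hli. }
      assert (E := theta_ext x y eps (fun a b => sum_f_R0 (fun j => Sm a b i j * Mf j l a b) i)
                     (fun a b => if Nat.eqb l i then H a b i else 0) a b Hab Hext).
      rewrite (theta_sum x y eps (fun j a b => Sm a b i j * Mf j l a b) i a b Hab Hg) in E.
      transitivity (theta (fun a b => if Nat.eqb l i then H a b i else 0) a b).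
      + rewrite <- E. apply sum_ext. intros j _.
        rewrite (theta_mult x y eps (fun a b => Sm a b i j) (Mf j l) a b Hab (GS i j) (proj1 (MG j l))).
        rewrite (proj2 (MG j l) a b Hab). reflexivity.
      + unfold H'. destruct (Nat.eqb l i). reflexivity. apply theta_const. }
    assert (hM : forall j l, Mf (Datatypes.S j) l a b = Mf j (Datatypes.S (Datatypes.S l)) a b).
    { intros; apply mom_shift. }
    assert (hk := Hker a b Hab).
    split; [|split].
    - intros i. apply (alg_Hnz (Sm a b) (fun j l => Mf j l a b) (H a b) H1 HU hk).
    - intros m. apply (alg_K1 (Sm a b) S' (fun j l => Mf j l a b) (H a b) H' H1 HU hS'0 hD hk).
    - intros m. apply (alg_K2 (Sm a b) S' (fun j l => Mf j l a b) (H a b) H' H1 H0 HU hS'0 hD hM hk). }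
  assert (Hxy : inbox x y eps x y).
  { split; rewrite Rminus_diag, Rabs_R0; exact Heps. }
  destruct n as [|n']; [lia|].
  replace (Datatypes.S n' - 1)%nat with n' by lia.
  destruct (ALG x y Hxy) as (Hnz & K1 & K2).
  set (G := fun a b => (Sm a b (Datatypes.S (Datatypes.S (Datatypes.S n'))) (Datatypes.S n')
             - Sm a b (Datatypes.S (Datatypes.S n')) n')
             + (Sm a b (Datatypes.S (Datatypes.S n')) (Datatypes.S n')
                - Sm a b (Datatypes.S (Datatypes.S (Datatypes.S n'))) (Datatypes.S (Datatypes.S n')))
               * Sm a b (Datatypes.S (Datatypes.S n')) (Datatypes.S n')).
  assert (HG : forall a b, inbox x y eps a b -> theta (f (Datatypes.S n')) a b = G a b).
  { intros a b Hab. destruct (ALG a b Hab) as (_ & K1' & _).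
    unfold f, G. rewrite (proj1 (K1' (Datatypes.S n')) (Datatypes.S n')) by lia. ring. }
  assert (GG : good x y eps G).
  { unfold G. apply good_plus. apply good_minus; apply GS. apply good_mult. apply good_minus; apply GS. apply GS. }
  split; [|split; [|split; [|split]]].
  - apply GH; auto.
  - apply GS; auto.
  - apply (good_ext x y eps G); auto. intros; symmetry; apply HG; auto.
  - unfold Hn, f. rewrite (proj2 (K1 n')). field. apply Hnz.
  - rewrite (theta_ext x y eps _ G x y Hxy HG).
    unfold G.
    assert (E := theta_G x y eps (fun a b => Sm a b (Datatypes.S (Datatypes.S (Datatypes.S n'))) (Datatypes.S n'))
       (fun a b => Sm a b (Datatypes.S (Datatypes.S n')) n')
       (fun a b => Sm a b (Datatypes.S (Datatypes.S n')) (Datatypes.S n'))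
       (fun a b => Sm a b (Datatypes.S (Datatypes.S (Datatypes.S n'))) (Datatypes.S (Datatypes.S n')))
       x y Hxy (GS _ _) (GS _ _) (GS _ _) (GS _ _)).
    cbv beta in E. rewrite E. clear E.
    rewrite (K2 (Datatypes.S n')), (K2 n').
    unfold Hn, f.
    field. split; apply Hnz.
Qed.
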